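(* Let $S_{r,N}$ be an atomic exponential Puiseux semiring with $r\notin\mathbb{N}$, and let $x\in S_{r,N}$. Then $x$ has a unique factorization $z_{\min}$ of minimum length, and for every $z\in\mathsf{Z}(x)$ there exist factorizations $z=z_1,z_2,\dots,z_k=z_{\min}$ in $\mathsf{Z}(x)$ such that, for each $i\in\{1,\dots,k-1\}$, $z_{i+1}$ is obtained from $z_i$ by replacing $\mathsf{n}(r)^{\delta_m}$ copies of the atom $r^{s_m}$ by $\mathsf{d}(r)^{\delta_m}$ copies of $r^{s_{m+1}}$ or vice versa (for some $m\in\mathbb{N}$), and $|z_i|-|z_{i+1}|=|\mathsf{n}(r)^{\delta_m}-\mathsf{d}(r)^{\delta_m}|$. If moreover $r>1$, then $x$ has a unique factorization $z_{\max}$ of maximum length, and for every $z\in\mathsf{Z}(x)$ there are factorizations $z=z_1,\dots,z_k=z_{\max}$ in $\mathsf{Z}(x)$, each obtained from the previous by such a replacement, with $|z_{i+1}|-|z_i|=|\mathsf{n}(r)^{\delta_m}-\mathsf{d}(r)^{\delta_m}|$ for some $m\in\mathbb{N}$ depending on $i$.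
   Context: $\mathbb{N}=\{0,1,2,\dots\}$. A numerical monoid $N$ is an additive submonoid of $\mathbb{N}$ with finite complement in $\mathbb{N}$. For $r\in\mathbb{Q}_{>0}$ write $r=\mathsf{n}(r)/\mathsf{d}(r)$ with $\mathsf{n}(r),\mathsf{d}(r)$ coprime positive integers. The exponential Puiseux semiring $S_{r,N}$ is the additive submonoid of $\mathbb{Q}_{\ge 0}$ generated by $\{r^k: k\in N\}$. Let $s_0<s_1<\cdots$ be the elements of $N$ in increasing order and $\delta_n=s_{n+1}-s_n$. For $r\notin\mathbb{N}$, $S_{r,N}$ is atomic iff $\mathsf{n}(r)>1$, and then its atoms are exactly $r^{s}$, $s\in N$; note the identity $\mathsf{n}(r)^{\delta_m}r^{s_m}=\mathsf{d}(r)^{\delta_m}r^{s_{m+1}}$. For an atomic monoid, $\mathsf{Z}(x)$ denotes the set of factorizations of $x$ (formal sums of atoms, i.e. elements of the free commutative monoid on the atoms, whose evaluation is $x$) and $|z|$ the length (number of atoms counted with multiplicity) of a factorization $z$. *)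

(* Defs.v *)
From HB Require Import structures.
From mathcomp Require Import all_boot all_order all_algebra.
From mathcomp Require Import finmap multiset.
Set Implicit Arguments. Unset Strict Implicit. Unset Printing Implicit Defensive.
Import Order.TTheory GRing.Theory Num.Theory.

Local Open Scope ring_scope.
Open Scope mset_scope.
Open Scope ring_scope.

Definition nr (r : rat) : nat := `|numq r|%N.
Definition dr (r : rat) : nat := `|denq r|%N.

Definition numerical_monoid (N : pred nat) : Prop :=
  N 0%N /\ (forall a b, N a -> N b -> N (a + b)%N) /\
  exists B : nat, forall n, (B <= n)%N -> N n.

(* a and b are consecutive elements of N, i.e. a = s_m and b = s_(m+1)
   for some m (then delta_m = b - a). *)
Definition consecutive (N : pred nat) (a b : nat) : Prop :=
  [/\ N a, N b, (a < b)%N & forall c, (a < c < b)%N -> ~~ N c].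

Definition in_S (r : rat) (N : pred nat) (x : rat) : Prop :=
  exists s : seq nat, all N s /\ x = \sum_(k <- s) r ^+ k.

(* The atoms of S_{r,N} (r not in N, n(r) > 1): the r^s with s in N. *)
Definition atom (r : rat) (N : pred nat) (a : rat) : Prop :=
  exists2 s, N s & a = r ^+ s.

(* z is a factorization of x: a multiset of atoms whose sum is x.
   Its length |z| is size z (number of atoms with multiplicity). *)
Definition is_fact (r : rat) (N : pred nat) (x : rat) (z : {mset rat}) : Prop :=
  (forall a, a \in z -> atom r N a) /\ \sum_(a <- z) a = x.

Definition repl_step (r : rat) (N : pred nat) (a b : nat)
    (z z' : {mset rat}) : Prop :=
  let A := msetn (nr r ^ (b - a))%N (r ^+ a) in
  let B := msetn (dr r ^ (b - a))%N (r ^+ b) in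
  consecutive N a b /\
  ((msubset A z /\ z' = msetD (msetB z A) B) \/
   (msubset B z /\ z' = msetD (msetB z B) A)).

Definition chain (r : rat) (N : pred nat) (x : rat) (dir : bool)
    (z z' : {mset rat}) : Prop :=
  exists zs : seq {mset rat},
    [/\ last z zs = z',
        (forall w, w \in zs -> is_fact r N x w) &
        forall i, (i < size zs)%N ->
          let zi := nth z (z :: zs) i in
          let zj := nth z (z :: zs) i.+1 in
          exists a b : nat,
            repl_step r N a b zi zj /\
            (if dir then (size zi)%:Z - (size zj)%:Z
                    else (size zj)%:Z - (size zi)%:Z)
            = `| (nr r ^ (b - a))%N%:Z - (dr r ^ (b - a))%N%:Z |].

(* Main.v *)
Require Import Defs.
From HB Require Import structures.
From mathcomp Require Import all_boot all_order all_algebra.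
From mathcomp Require Import finmap multiset.
From mathcomp Require Import zify ring.
From Stdlib Require Import Classical.
Import Order.TTheory GRing.Theory Num.Theory.
Local Open Scope ring_scope.
Open Scope mset_scope.
Open Scope ring_scope.

Set Implicit Arguments. Unset Strict Implicit. Unset Printing Implicit Defensive.

Lemma dvd_diff (m X Y R1 R2 : nat) : (X + R1 = Y + R2 -> m %| R1 -> m %| R2 -> m %| Y - X)%N.
Proof.
move=> E h1 h2; case: (leqP X Y) => hXY; last first.
  by have -> : (Y - X = 0)%N by apply/eqP; rewrite subn_eq0 ltnW.
have HR : R1 = (Y - X + R2)%N by lia.
by rewrite HR dvdn_addl in h1.
Qed.

Lemma dvd_small (k m : nat) : (m %| k -> k < m -> k = 0)%N.
Proof. by case: k => // k dv lt; have := dvdn_leq (ltn0Sn k) dv; rewrite leqNgt lt. Qed.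

Lemma core (p q E : nat) (c1 c2 : nat -> nat) :
  (0 < p)%N -> (0 < q)%N -> coprime p q ->
  (\sum_(0 <= s < E.+1) c1 s * (p ^ s * q ^ (E - s)) =
   \sum_(0 <= s < E.+1) c2 s * (p ^ s * q ^ (E - s)))%N ->
  (forall a f, (a < f <= E)%N -> (0 < c1 a + c2 a)%N -> (0 < c1 f + c2 f)%N ->
     exists g, [/\ (0 < g)%N, (c1 a < p ^ g)%N, (c2 a < p ^ g)%N &
        forall h, (a < h < a + g)%N -> (h <= E)%N -> (c1 h + c2 h = 0)%N]) ->
  forall s, (s <= E)%N -> c1 s = c2 s.
Proof.
move=> p0 q0 cpq Heq Hn s0 s0E; apply/eqP; apply: contraT => ne0.
have exP : exists s, (s <= E)%N && (c1 s != c2 s) by exists s0; rewrite s0E.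
case: (ex_minnP exP) => a /andP[aE nea] amin.
pose w := fun s => (p ^ s * q ^ (E - s))%N.
have wpos : forall s, (0 < w s)%N by move=> s; rewrite /w muln_gt0 !expn_gt0 p0 q0.
have spl : forall c : nat -> nat, (\sum_(0 <= s < E.+1) c s * w s =
    \sum_(0 <= s < a) c s * w s + (c a * w a + \sum_(a.+1 <= s < E.+1) c s * w s))%N.
  move=> c; rewrite (@big_cat_nat _ _ _ a 0 E.+1) ?leq0n ?ltnS ?leqW //.
  by rewrite (@big_ltn _ _ _ a E.+1) ?ltnS.
have low : (\sum_(0 <= s < a) c1 s * w s = \sum_(0 <= s < a) c2 s * w s)%N.
  apply: eq_big_nat => s /andP[_ sa]; congr (_ * _)%N.
  case: (eqVneq (c1 s) (c2 s)) => // ne.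
  have := amin s; rewrite ne andbT (leq_trans (ltnW sa) aE) => /(_ isT).
  by rewrite leqNgt sa.
have {}Heq := Heq; rewrite -/w in Heq.
rewrite !spl low in Heq; move/addnI: Heq => Heq.
case: (classic (exists f, (a < f <= E)%N /\ (0 < c1 f + c2 f)%N)) => [[f [hf1 hf2]] | nf].
  have pa : (0 < c1 a + c2 a)%N.
    by rewrite addn_gt0 !lt0n; apply: contraTT nea; rewrite negb_or !negbK => /andP[/eqP-> /eqP->].
  have [g [g0 g1 g2 gh]] := Hn a f hf1 pa hf2.
  have dR : forall c : nat -> nat, (forall h, (a < h < a + g)%N -> (h <= E)%N -> c h = 0%N) ->
      (p ^ (a + g) %| \sum_(a.+1 <= s < E.+1) c s * w s)%N.
    move=> c hc; rewrite big_nat_cond; apply: dvdn_sum => s /andP[/andP[s1 s2] _].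
    case: (ltnP s (a + g)) => sg.
      by rewrite hc ?mul0n ?dvdn0 // ?s1 ?sg // -ltnS.
    by apply: dvdn_mull; rewrite /w; apply: dvdn_mulr; rewrite dvdn_exp2l.
  have d1 : (p ^ (a + g) %| \sum_(a.+1 <= s < E.+1) c1 s * w s)%N.
    by apply: dR => h hh hE; have /eqP := gh h hh hE; rewrite addn_eq0 => /andP[/eqP].
  have d2 : (p ^ (a + g) %| \sum_(a.+1 <= s < E.+1) c2 s * w s)%N.
    by apply: dR => h hh hE; have /eqP := gh h hh hE; rewrite addn_eq0 => /andP[_ /eqP].
  have key : forall k, (p ^ (a + g) %| k * w a)%N -> (k < p ^ g)%N -> k = 0%N.
    move=> k dk kl; apply: (dvd_small _ kl).
    move: dk; rewrite /w expnD mulnCA dvdn_pmul2l ?expn_gt0 ?p0 //.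
    by rewrite mulnC Gauss_dvdr // coprimeXl // coprimeXr.
  have e1 := dvd_diff Heq d1 d2.
  have e2 := dvd_diff (esym Heq) d2 d1.
  rewrite -mulnBl in e1; rewrite -mulnBl in e2.
  have k1 := key _ e1 (leq_ltn_trans (leq_subr _ _) g2).
  have k2 := key _ e2 (leq_ltn_trans (leq_subr _ _) g1).
  have : c1 a == c2 a by rewrite eqn_leq -!subn_eq0 k1 k2.
  by rewrite (negbTE nea).
have z1 : forall c : nat -> nat, (forall h, (a < h <= E)%N -> c h = 0%N) ->
    (\sum_(a.+1 <= s < E.+1) c s * w s = 0)%N.
  move=> c hc; rewrite big_nat_cond big1 // => s /andP[/andP[s1 s2] _].
  by rewrite hc ?mul0n // s1 -ltnS.
have hz : forall h, (a < h <= E)%N -> (c1 h + c2 h = 0)%N.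
  move=> h hh; apply/eqP; rewrite -leqn0 leqNgt; apply/negP => hp.
  by apply: nf; exists h.
have y1 : (\sum_(a.+1 <= s < E.+1) c1 s * w s = 0)%N.
  by apply: z1 => h /hz /eqP; rewrite addn_eq0 => /andP[/eqP].
have y2 : (\sum_(a.+1 <= s < E.+1) c2 s * w s = 0)%N.
  by apply: z1 => h /hz /eqP; rewrite addn_eq0 => /andP[_ /eqP].
rewrite y1 y2 !addn0 in Heq.
by move/eqP: Heq; rewrite eqn_pmul2r // (negbTE nea).
Qed.

Lemma rdec (r : rat) : 0 < r -> r = (nr r)%:R / (dr r)%:R.
Proof.
move=> r0.
have n0 : 0 <= numq r by rewrite ltW // numq_gt0.
rewrite -[LHS]divq_num_den /nr /dr.
by rewrite !natr_absz !ger0_norm // ltW // denq_gt0.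
Qed.

Lemma dr_gt0 (r : rat) : (0 < dr r)%N.
Proof. by rewrite /dr absz_gt0 denq_neq0. Qed.

Lemma cop_nd (r : rat) : coprime (nr r) (dr r).
Proof. exact: coprime_num_den. Qed.

Lemma sum_nseq k (t : rat) : \sum_(a <- nseq k t) a = k%:R * t.
Proof.
elim: k => [|k IH]; first by rewrite big_nil mul0r.
by rewrite /= big_cons IH -add1n natrD mulrDl mul1r.
Qed.

Lemma sum_msetn k (t : rat) : \sum_(a <- msetn k t) a = k%:R * t.
Proof. by rewrite enum_msetn sum_nseq. Qed.

Lemma size_msetn k (t : rat) : size (msetn k t) = k.
Proof. by rewrite enum_msetn size_nseq. Qed.

Lemma perm_msetD (A B : {mset rat}) : perm_eq (msetD A B) ((A : seq rat) ++ B).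
Proof. by apply/allP => a _ /=; rewrite count_cat !count_mem_mset msetE2. Qed.

Lemma sum_msetD (A B : {mset rat}) :
  \sum_(a <- msetD A B) a = \sum_(a <- A) a + \sum_(a <- B) a.
Proof. by rewrite (perm_big _ (perm_msetD A B)) big_cat. Qed.

Lemma size_msetD (A B : {mset rat}) : size (msetD A B) = (size A + size B)%N.
Proof. by rewrite (perm_size (perm_msetD A B)) size_cat. Qed.

Lemma msub_n k t (z : {mset rat}) : msubset (msetn k t) z = (k <= z t)%N.
Proof.
apply/msubsetP/idP => [H | h u]; first by have := H t; rewrite msetnxx.
by rewrite msetnE; case: eqP => [->|].
Qed.

Lemma move_fact r N x (X Y z : {mset rat}) :
  is_fact r N x z -> msubset X z -> \sum_(a <- X) a = \sum_(a <- Y) a ->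
  (forall a, a \in Y -> atom r N a) ->
  is_fact r N x (msetD (msetB z X) Y) /\
  (size (msetD (msetB z X) Y) + size X = size z + size Y)%N.
Proof.
move=> [hat hsum] sub sXY hY.
have zE : z = msetD (msetB z X) X by rewrite msetBDK.
split; first split.
- move=> a; rewrite in_msetD => /orP[h|]; last exact: hY.
  by apply: hat; apply: (msubset_subset (msubsetDl z X)).
- by rewrite sum_msetD -sXY -sum_msetD -zE.
- by rewrite [in RHS]zE !size_msetD addnAC.
Qed.

Lemma cnt_sum (s : seq rat) t : \sum_(a <- s | a == t) a = (count_mem t s)%:R * t.
Proof.
elim: s => [|b s IH]; first by rewrite big_nil mul0r.
rewrite big_cons IH /=; case: eqP => [->|_]; last by rewrite add0n.
by rewrite natrD mulrDl mul1r.
Qed.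

Lemma sum_counts (r : rat) (z : {mset rat}) E :
  injective (GRing.exp r) ->
  (forall a, a \in z -> exists2 k, (k <= E)%N & a = r ^+ k) ->
  \sum_(a <- z) a = \sum_(0 <= s < E.+1) (z (r ^+ s))%:R * r ^+ s.
Proof.
move=> inj H.
transitivity (\sum_(a <- z) \sum_(0 <= s < E.+1) (if a == r ^+ s then a else 0)).
  rewrite big_seq_cond [RHS]big_seq_cond; apply: eq_bigr => a /andP[az _].
  have [k kE ->] := H a az.
  rewrite -big_mkcond /=.
  rewrite (eq_bigl (pred1 k)); last by move=> s; rewrite /= (inj_eq inj) eq_sym.
  rewrite -big_filter filter_pred1_uniq ?big_seq1 ?iota_uniq //.
  by rewrite mem_index_iota ltnS kE.
rewrite exchange_big; apply: eq_bigr => s _.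
by rewrite -big_mkcond cnt_sum count_mem_mset.
Qed.

Lemma scale_sum (r : rat) E (c : nat -> nat) :
  0 < r ->
  (\sum_(0 <= s < E.+1) (c s)%:R * r ^+ s) * (dr r ^ E)%:R =
  (\sum_(0 <= s < E.+1) c s * (nr r ^ s * dr r ^ (E - s)))%:R.
Proof.
move=> r0; rewrite natr_sum mulr_suml; apply: eq_big_nat => s /andP[_ sE].
rewrite {1}(rdec r0) -(subnK (sE : (s <= E)%N)) addnC.
rewrite !natrM !natrX addKn exprD expr_div_n.
have d0 : (dr r)%:R != 0 :> rat by rewrite pnatr_eq0 -lt0n dr_gt0.
by field; rewrite expf_neq0.
Qed.

Lemma exp_bound (r : rat) N (s : seq rat) :
  (forall a, a \in s -> atom r N a) ->
  exists E, forall a, a \in s -> exists2 k, (k <= E)%N && N k & a = r ^+ k.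
Proof.
elim: s => [|b s IH] H; first by exists 0%N.
have [E HE] := IH (fun a h => H a (mem_behead (h : a \in behead (b :: s)))).
have [k Nk bk] := H b (mem_head _ _).
exists (maxn E k) => a; rewrite in_cons => /orP[/eqP ->|/HE [j /andP[jE Nj] ->]].
  by exists k => //; rewrite leq_maxr Nk.
by exists j => //; rewrite (leq_trans jE (leq_maxl _ _)) Nj.
Qed.

Definition nA (r : rat) a b := msetn (nr r ^ (b - a))%N (r ^+ a).
Definition nB (r : rat) a b := msetn (dr r ^ (b - a))%N (r ^+ b).
Definition normalA r N (z : {mset rat}) :=
  forall a b, consecutive N a b -> ~ msubset (nA r a b) z.
Definition normalB r N (z : {mset rat}) :=
  forall a b, consecutive N a b -> ~ msubset (nB r a b) z.

Lemma nr_gt0 (r : rat) : 0 < r -> (0 < nr r)%N.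
Proof. by move=> r0; rewrite /nr absz_gt0; apply: lt0r_neq0; rewrite numq_gt0. Qed.

Lemma inN r N x z a : injective (GRing.exp r) -> is_fact r N x z ->
  (0 < z (r ^+ a))%N -> N a.
Proof.
move=> inj [hat _]; rewrite mset_gt0 => /hat [s Ns /inj ->] //.
Qed.

Lemma zeroN r N x z h : injective (GRing.exp r) -> is_fact r N x z ->
  ~~ N h -> z (r ^+ h) = 0%N.
Proof.
move=> inj fz nh; apply/eqP; rewrite -leqn0 leqNgt; apply/negP => /(inN inj fz).
by rewrite (negbTE nh).
Qed.

Lemma fact_eq r N x z1 z2 : 0 < r -> injective (GRing.exp r) ->
  is_fact r N x z1 -> is_fact r N x z2 ->
  exists E, 
   (\sum_(0 <= s < E.+1) z1 (r ^+ s) * (nr r ^ s * dr r ^ (E - s)) =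
    \sum_(0 <= s < E.+1) z2 (r ^+ s) * (nr r ^ s * dr r ^ (E - s)))%N /\
   ((forall k, (k <= E)%N -> z1 (r ^+ k) = z2 (r ^+ k)) -> z1 = z2).
Proof.
move=> r0 inj f1 f2.
have hat : forall a, a \in (z1 : seq rat) ++ z2 -> atom r N a.
  by move=> a; rewrite mem_cat => /orP[h|h]; [apply: f1.1 | apply: f2.1].
have [E HE] := exp_bound hat.
have b1 : forall a, a \in z1 -> exists2 k, (k <= E)%N & a = r ^+ k.
  move=> a h; have [k /andP[kE _] ->] := HE a (etrans (mem_cat _ _ _) (introT orP (or_introl h))).
  by exists k.
have b2 : forall a, a \in z2 -> exists2 k, (k <= E)%N & a = r ^+ k.
  move=> a h; have [k /andP[kE _] ->] := HE a (etrans (mem_cat _ _ _) (introT orP (or_intror h))).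
  by exists k.
exists E; split.
  apply/eqP; rewrite -(eqr_nat rat) -!scale_sum //.
  by rewrite -(sum_counts inj b1) -(sum_counts inj b2) f1.2 f2.2.
move=> H; apply/msetP => t.
case: (boolP (t \in (z1 : seq rat) ++ z2)) => [/HE [k /andP[kE _] ->] | ].
  exact: H.
rewrite mem_cat negb_or => /andP[n1 n2].
by rewrite (mset_eq0P (n1 : t \notin z1)) (mset_eq0P (n2 : t \notin z2)).
Qed.

Lemma uniqA r N x z1 z2 : 0 < r -> r != 1 ->
  is_fact r N x z1 -> is_fact r N x z2 -> normalA r N z1 -> normalA r N z2 -> z1 = z2.
Proof.
move=> r0 r1 f1 f2 n1 n2.
have inj := ieexprIn r0 r1.
have [E [Heq Hfin]] := fact_eq r0 inj f1 f2.
apply: Hfin; apply: (core (nr_gt0 r0) (dr_gt0 r) (cop_nd r) Heq).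
move=> a f /andP[af fE] pa pf.
have Na : N a.
  by move: pa; rewrite addn_gt0 => /orP[/(inN inj f1)|/(inN inj f2)].
have Nf : N f.
  by move: pf; rewrite addn_gt0 => /orP[/(inN inj f1)|/(inN inj f2)].
have exP : exists y, (a < y)%N && N y by exists f; rewrite af Nf.
case: (ex_minnP exP) => b /andP[ab Nb] bmin.
have cons : consecutive N a b.
  split => // c /andP[ac cb]; apply/negP => Nc.
  by have := bmin c; rewrite ac Nc => /(_ isT); rewrite leqNgt cb.
exists (b - a)%N; split.
- by rewrite subn_gt0.
- by have := n1 a b cons; rewrite /nA msub_n => /negP; rewrite -ltnNge.
- by have := n2 a b cons; rewrite /nA msub_n => /negP; rewrite -ltnNge.
move=> h /andP[ah hb] _.
have nh : ~~ N h.
  have [_ _ _ cb] := cons; apply: cb; rewrite ah /=.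
  by rewrite subnKC ?(ltnW ab) in hb.
by rewrite (zeroN inj f1 nh) (zeroN inj f2 nh).
Qed.

Lemma rev_sum p q E (c : nat -> nat) :
  (\sum_(0 <= s < E.+1) c s * (p ^ s * q ^ (E - s)) =
   \sum_(0 <= s < E.+1) c (E - s) * (q ^ s * p ^ (E - s)))%N.
Proof.
rewrite big_nat_rev; apply: eq_big_nat => s /andP[_ sE].
rewrite add0n subSS subKn //.
by congr (_ * _)%N; apply: mulnC.
Qed.

Lemma uniqB r N x z1 z2 : 0 < r -> r != 1 ->
  is_fact r N x z1 -> is_fact r N x z2 -> normalB r N z1 -> normalB r N z2 -> z1 = z2.
Proof.
move=> r0 r1 f1 f2 n1 n2.
have inj := ieexprIn r0 r1.
have [E [Heq Hfin]] := fact_eq r0 inj f1 f2.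
have {}Heq := etrans (esym (rev_sum (nr r) (dr r) E (fun s => z1 (r ^+ s))))
   (etrans Heq (rev_sum (nr r) (dr r) E (fun s => z2 (r ^+ s)))).
have := core (c1 := fun s => z1 (r ^+ (E - s))) (c2 := fun s => z2 (r ^+ (E - s)))
   (dr_gt0 r) (nr_gt0 r0) _ Heq.
rewrite coprime_sym cop_nd => /(_ isT) H.
apply: Hfin => k kE; rewrite -(subKn kE); apply: H; last exact: leq_subr.
move=> a f /andP[af fE] pa pf.
have Na : N (E - a)%N.
  by move: pa; rewrite addn_gt0 => /orP[/(inN inj f1)|/(inN inj f2)].
have Nf : N (E - f)%N.
  by move: pf; rewrite addn_gt0 => /orP[/(inN inj f1)|/(inN inj f2)].
pose b := (E - a)%N.
have exP : exists y, (y < b)%N && N y by exists (E - f)%N; rewrite Nf andbT /b; lia.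
have ubP : forall y, (y < b)%N && N y -> (y <= b)%N by move=> y /andP[/ltnW].
case: (ex_maxnP exP ubP) => a' /andP[ab Na'] amax.
have cons : consecutive N a' b.
  split => // c /andP[ac cb]; apply/negP => Nc.
  by have := amax c; rewrite cb Nc => /(_ isT); rewrite leqNgt ac.
exists (b - a')%N; split.
- by rewrite subn_gt0.
- by have := n1 a' b cons; rewrite /nB msub_n => /negP; rewrite -ltnNge.
- by have := n2 a' b cons; rewrite /nB msub_n => /negP; rewrite -ltnNge.
move=> h /andP[ah hb] hE.
have nh : ~~ N (E - h)%N.
  have [_ _ _ cb] := cons; apply: cb.
  apply/andP; split; rewrite /b in ab hb *; lia.
by rewrite /= (zeroN inj f1 nh) (zeroN inj f2 nh).
Qed.

Definition step r N (dir : bool) (z z' : {mset rat}) := exists a b,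
  repl_step r N a b z z' /\
  (if dir then (size z)%:Z - (size z')%:Z else (size z')%:Z - (size z)%:Z)
    = `| (nr r ^ (b - a))%N%:Z - (dr r ^ (b - a))%N%:Z |.

Lemma chain_ex r N x dir (P : {mset rat} -> Prop) (mu : {mset rat} -> nat) :
  (forall z, is_fact r N x z -> P z \/
     exists z', [/\ step r N dir z z', is_fact r N x z' & (mu z' < mu z)%N]) ->
  forall z, is_fact r N x z -> exists z', [/\ P z', is_fact r N x z' & chain r N x dir z z'].
Proof.
move=> H z; have [k] := ubnP (mu z); elim: k z => // k IH z Hk fz.
case: (H z fz) => [Pz | [z' [st fz' lt]]].
  by exists z; split => //; exists [::]; split.
have [z'' [Pz'' fz'' [zs [Hl Hm Hs]]]] := IH z' (leq_trans lt (Hk : (mu z <= k)%N)) fz'.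
exists z''; split => //; exists (z' :: zs); split => //.
  by move=> w; rewrite in_cons => /orP[/eqP->|]; [exact: fz' | exact: Hm].
case=> [|i] Hi; first exact: st.
have Hi' : (i < size zs)%N by [].
have := Hs i Hi'; cbv zeta.
rewrite [nth z _ i.+1](set_nth_default z') ?[nth z _ i.+2](set_nth_default z') //=.
by rewrite ltnS ltnW.
Qed.

Lemma ndiff r k : (1 < nr r)%N -> (0 < k)%N ->
  (nr r ^ k)%N%:Z - (dr r ^ k)%N%:Z != 0.
Proof.
move=> n1 k0; rewrite subr_eq0 eqz_nat; apply/negP => /eqP e.
have := coprimeXl k (coprimeXr k (cop_nd r)); rewrite -e /coprime gcdnn.
by move/eqP=> h; have := ltn_exp2l 0 k n1; rewrite h expn0 k0.
Qed.

Lemma chain_size r N x dir z z' : (1 < nr r)%N ->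
  chain r N x dir z z' ->
  (if dir then (size z' <= size z)%N else (size z <= size z')%N) /\
  (size z = size z' -> z = z').
Proof.
move=> n1 [zs [Hl Hm Hs]].
have key : forall k, (k <= size zs)%N ->
   if dir then (size (nth z (z :: zs) k))%:Z + k%:Z <= (size z)%:Z
   else (size z)%:Z + k%:Z <= (size (nth z (z :: zs) k))%:Z.
  elim => [|k IH] hk; first by destruct dir; rewrite addr0.
  have := Hs k hk; cbv zeta => -[a [b [[[_ _ ab _] _] e]]].
  have pos : 0 < `| (nr r ^ (b - a))%N%:Z - (dr r ^ (b - a))%N%:Z |.
    by rewrite normr_gt0 ndiff // subn_gt0.
  have := IH (ltnW hk).
  destruct dir; lia.
have := key (size zs) (leqnn _); rewrite -last_nth Hl => hz.
split; first by destruct dir; lia.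
move=> e; have zs0 : size zs = 0%N by destruct dir; lia.
by move: Hl; rewrite (size0nil zs0).
Qed.

Lemma sumAB r a b : 0 < r -> (a <= b)%N ->
  \sum_(t <- nA r a b) t = \sum_(t <- nB r a b) t.
Proof.
move=> r0 ab; rewrite /nA /nB !sum_msetn.
have d0 : (dr r)%:R != 0 :> rat by rewrite pnatr_eq0 -lt0n dr_gt0.
have rd : r * (dr r)%:R = (nr r)%:R.
  by rewrite [X in X * _ = _](rdec r0) divfK.
have -> : r ^+ b = r ^+ a * r ^+ (b - a) by rewrite -exprD subnKC.
rewrite !natrX -rd exprMn; ring.
Qed.

Lemma atom_msetn (r : rat) (N : pred nat) k s t : N s -> t \in msetn k (r ^+ s) -> atom r N t.
Proof. by move=> Ns /msetnP [_ ->]; exists s. Qed.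

Lemma sonA r N x z : 0 < r -> is_fact r N x z ->
  normalA r N z \/ exists a b, [/\ consecutive N a b,
    is_fact r N x (msetD (msetB z (nA r a b)) (nB r a b)),
    repl_step r N a b z (msetD (msetB z (nA r a b)) (nB r a b)) &
    (size (msetD (msetB z (nA r a b)) (nB r a b)) + nr r ^ (b - a) =
     size z + dr r ^ (b - a))%N].
Proof.
move=> r0 fz.
case: (classic (exists a b, consecutive N a b /\ msubset (nA r a b) z)) =>
  [[a [b [cons sub]]] | nex]; last by left => a b c s; apply: nex; exists a, b.
right; exists a, b.
have [_ Nb ab _] := cons.
have [f sz] := move_fact fz sub (sumAB r0 (ltnW ab)) (fun t => @atom_msetn r N _ _ t Nb).
rewrite !size_msetn in sz.
by split => //; split => //; left.
Qed.

Lemma sonB r N x z : 0 < r -> is_fact r N x z ->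
  normalB r N z \/ exists a b, [/\ consecutive N a b,
    is_fact r N x (msetD (msetB z (nB r a b)) (nA r a b)),
    repl_step r N a b z (msetD (msetB z (nB r a b)) (nA r a b)) &
    (size (msetD (msetB z (nB r a b)) (nA r a b)) + dr r ^ (b - a) =
     size z + nr r ^ (b - a))%N].
Proof.
move=> r0 fz.
case: (classic (exists a b, consecutive N a b /\ msubset (nB r a b) z)) =>
  [[a [b [cons sub]]] | nex]; last by left => a b c s; apply: nex; exists a, b.
right; exists a, b.
have [Na _ ab _] := cons.
have [f sz] := move_fact fz sub (esym (sumAB r0 (ltnW ab))) (fun t => @atom_msetn r N _ _ t Na).
rewrite !size_msetn in sz.
by split => //; split => //; right.
Qed.

Lemma finish r N x dir (P : {mset rat} -> Prop) (mu : {mset rat} -> nat) :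
  (1 < nr r)%N -> (exists z0, is_fact r N x z0) ->
  (forall z, is_fact r N x z -> P z \/
     exists z', [/\ step r N dir z z', is_fact r N x z' & (mu z' < mu z)%N]) ->
  (forall z1 z2, is_fact r N x z1 -> is_fact r N x z2 -> P z1 -> P z2 -> z1 = z2) ->
  exists zm, [/\ is_fact r N x zm,
    (forall z, is_fact r N x z ->
       if dir then (size zm <= size z)%N else (size z <= size zm)%N),
    (forall z, is_fact r N x z -> size z = size zm -> z = zm) &
    (forall z, is_fact r N x z -> chain r N x dir z zm)].
Proof.
move=> n1 [z0 f0] H U.
have [zm [Pm fm _]] := chain_ex H f0.
have ch : forall z, is_fact r N x z -> chain r N x dir z zm.
  move=> z fz; have [z' [Pz' fz' c]] := chain_ex H fz.
  by rewrite -(U _ _ fz' fm Pz' Pm).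
exists zm; split => //.
- by move=> z fz; have [h _] := chain_size n1 (ch z fz).
- by move=> z fz; have [_ h] := chain_size n1 (ch z fz).
Qed.

Lemma absdiff (u v : nat) : (v <= u)%N -> `|u%:Z - v%:Z| = u%:Z - v%:Z.
Proof. by move=> h; rewrite ger0_norm // subr_ge0 lez_nat. Qed.

Lemma absdiff' (u v : nat) : (u <= v)%N -> `|u%:Z - v%:Z| = v%:Z - u%:Z.
Proof. by move=> h; rewrite distrC absdiff. Qed.

Lemma size_le r N x z : 1 < r -> is_fact r N x z -> (size z)%:R <= x.
Proof.
move=> r1 [hat <-].
rewrite -sum1_size natr_sum big_seq [X in _ <= X]big_seq; apply: ler_sum => a az.
by have [s _ ->] := hat a az; apply: exprn_ege1; rewrite ltW.
Qed.

Lemma gt1 r : 0 < r -> (1 < r) = (dr r < nr r)%N.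
Proof.
move=> r0; have := rdec r0; set n := nr r; set d := dr r => ->.
have d0 : 0 < (d%:R : rat) by rewrite ltr0n; apply: dr_gt0.
by rewrite ltr_pdivlMr // mul1r ltr_nat.
Qed.

Lemma lt1 r : 0 < r -> (r < 1) = (nr r < dr r)%N.
Proof.
move=> r0; have := rdec r0; set n := nr r; set d := dr r => ->.
have d0 : 0 < (d%:R : rat) by rewrite ltr0n; apply: dr_gt0.
by rewrite ltr_pdivrMr // mul1r ltr_nat.
Qed.

Unset Implicit Arguments.

Theorem mainTheorem2 (r : rat) (N : pred nat) (x : rat) :
  numerical_monoid N ->
  0 < r ->
  (forall n : nat, r != n%:R) ->
  (1 < nr r)%N ->
  in_S r N x ->
  (exists zmin : {mset rat},
     [/\ is_fact r N x zmin,
         (forall z, is_fact r N x z -> (size zmin <= size z)%N),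
         (forall z, is_fact r N x z -> size z = size zmin -> z = zmin) &
         (forall z, is_fact r N x z -> chain r N x true z zmin)]) /\
  (1 < r ->
   exists zmax : {mset rat},
     [/\ is_fact r N x zmax,
         (forall z, is_fact r N x z -> (size z <= size zmax)%N),
         (forall z, is_fact r N x z -> size z = size zmax -> z = zmax) &
         (forall z, is_fact r N x z -> chain r N x false z zmax)]).
Proof.
move=> NM r0 rN n1 xS.
have r1 : r != 1 by exact: (rN 1%N).
have ex0 : exists z0, is_fact r N x z0.
  case: xS => s [alls ->]; exists (seq_mset [seq r ^+ k | k <- s]); split.
    move=> a ha; have : a \in [seq r ^+ k | k <- s].
      by rewrite -(perm_mem (perm_eq_seq_mset _)); exact: ha.
    case/mapP => k ks ->.
    by exists k => //; apply: (allP alls).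
  by rewrite (perm_big _ (perm_eq_seq_mset _)) big_map.
split.
  case/orP: (lt_total r1) => hr.
    have nd : (nr r < dr r)%N by rewrite -lt1.
    apply: (@finish r N x true (normalB r N) (fun z => size z) n1 ex0 _ (fun z1 z2 h1 h2 => uniqB r0 r1 h1 h2)).
    move=> z fz; case: (sonB r0 fz) => [nz|[a [b [cons f' rs sz]]]]; [by left | right].
    have [_ _ ab _] := cons.
    have lt : (nr r ^ (b - a) < dr r ^ (b - a))%N by rewrite ltn_exp2r ?subn_gt0.
    exists (msetD (msetB z (nB r a b)) (nA r a b)); split => //; last by lia.
    exists a, b; split => //.
    by rewrite absdiff' ?(ltnW lt) //; lia.
  have nd : (dr r < nr r)%N by rewrite -gt1.
  apply: (@finish r N x true (normalA r N) (fun z => size z) n1 ex0 _ (fun z1 z2 h1 h2 => uniqA r0 r1 h1 h2)).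
  move=> z fz; case: (sonA r0 fz) => [nz|[a [b [cons f' rs sz]]]]; [by left | right].
  have [_ _ ab _] := cons.
  have lt : (dr r ^ (b - a) < nr r ^ (b - a))%N by rewrite ltn_exp2r ?subn_gt0.
  exists (msetD (msetB z (nA r a b)) (nB r a b)); split => //; last by lia.
  exists a, b; split => //.
  by rewrite absdiff ?(ltnW lt) //; lia.
move=> hr.
have nd : (dr r < nr r)%N by rewrite -gt1.
have [z0 f0] := ex0.
have x0 : 0 <= x := le_trans (ler0n _ _) (size_le hr f0).
pose B := Num.Def.archi_bound x.
have hB : x < B%:R := archi_boundP x0.
have szB : forall z, is_fact r N x z -> (size z < B)%N.
  by move=> z fz; rewrite -(ltr_nat rat); exact: le_lt_trans (size_le hr fz) hB.
apply: (@finish r N x false (normalB r N) (fun z => B - size z)%N n1 ex0 _ (fun z1 z2 h1 h2 => uniqB r0 r1 h1 h2)).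
move=> z fz; case: (sonB r0 fz) => [nz|[a [b [cons f' rs sz]]]]; [by left | right].
have [_ _ ab _] := cons.
have lt : (dr r ^ (b - a) < nr r ^ (b - a))%N by rewrite ltn_exp2r ?subn_gt0.
have := szB _ f'; have := szB _ fz => h1 h2.
exists (msetD (msetB z (nB r a b)) (nA r a b)); split => //; last by lia.
exists a, b; split => //.
by rewrite absdiff ?(ltnW lt) //; lia.
Qed.
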